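(* Let $k\in\omega\setminus\{0\}$, let $f_{i_1},\dots,f_{i_n}\in\{f_1,\dots,f_{m(k)}\}$ ($n\ge0$), and let $T=T_k^*(f_{i_1},0)\cdots(f_{i_n},0)$. If $T\ne\Lambda$, then $r(T)\ge\max(1,k-n)$.
   Context: Notation: $\omega=\{0,1,2,\dots\}$; $\mathcal P(\omega)$ is the set of nonempty finite subsets of $\omega$; $E_2=\{0,1\}$. $P=\{f_i:i\in\omega\}$ is a set of attributes. Decision tables: $\mathcal M_2^\infty$ is the set of rectangular tables filled with numbers from $E_2$, whose columns are labeled with pairwise different attributes from $P$, whose rows are pairwise different, and each row of which is labeled with a set from $\mathcal P(\omega)$ (its set of decisions). The empty table is denoted $\Lambda$. For nonempty $T$ and a word $\alpha=(f_{i_1},\delta_1)\cdots(f_{i_m},\delta_m)$ with $f_{i_j}$ column attributes of $T$ and $\delta_j\in E_2$, $T\alpha$ is the subtable consisting of the rows having value $\delta_j$ in column $f_{i_j}$ for all $j$; $T\lambda=T$ for the empty word; $\Lambda\alpha=\Lambda$. The graph $G_k$ and tables $T_k$, $T_k^*$ ($k\ge1$): $G_k$ is a directed graph whose nodes are arranged in $k$ layers, layer $s$ ($1\le s\le k$) containing $s$ nodes; the nodes are numbered $1,\dots,m(k)$, $m(k)=k(k+1)/2$, layer by layer from the top and from left to right within a layer (so the $j$th node of layer $s$ has number $s(s-1)/2+j$). For a node $i$ that is the $j$th node of layer $s<k$, its left child $l(i)$ is the $j$th node of layer $s+1$ and its right child $p(i)$ is the $(j+1)$th node of layer $s+1$;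 the edges of $G_k$ go from each node to its two children. Define $\nu_k:E_2^{m(k)}\to\mathcal P(\omega)$: for $\bar\delta=(\delta_1,\dots,\delta_{m(k)})$, $\nu_k(\bar\delta)\subseteq\{0,1,\dots,m(k)\}$, where $0\in\nu_k(\bar\delta)$ iff $\delta_1=0$; for a node $i$ not in layer $k$, $i\in\nu_k(\bar\delta)$ iff $\delta_i=1$ and $\delta_{l(i)}=\delta_{p(i)}=0$; for a node $i$ in layer $k$, $i\in\nu_k(\bar\delta)$ iff $\delta_i=1$. $T_k\in\mathcal M_2^\infty$ is the table with $m(k)$ columns labeled $f_1,\dots,f_{m(k)}$ (column $f_i$ corresponding to node $i$), whose rows are all $2^{m(k)}$ tuples of $E_2^{m(k)}$, each row $\bar\delta$ labeled with $\nu_k(\bar\delta)$. A complete path in $G_k$ is a directed path from node $1$ to a node of layer $k$; its characteristic tuple is $(\delta_1,\dots,\delta_{m(k)})\in E_2^{m(k)}$ with $\delta_i=1$ iff the path passes through node $i$. $T_k^*$ is the subtable of $T_k$ consisting of exactly the rows that are characteristic tuples of complete paths in $G_k$. For a subtable $T$ of $T_k^*$ with rows $\bar\delta_1,\dots,\bar\delta_t$, $r(T)=|\{\nu_k(\bar\delta_1),\dots,\nu_k(\bar\delta_t)\}|$ (the number of distinct decision sets among its rows). *)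

(* Defs.v *)
From mathcomp Require Import all_boot.
Set Implicit Arguments. Unset Strict Implicit. Unset Printing Implicit Defensive.

(* m(k) = k(k+1)/2 : number of nodes of G_k *)
Definition m (k : nat) : nat := (k * k.+1) %/ 2.

(* Number of the (j+1)-th node of layer (s+1), with 0-based s, j:
   (s+1)s/2 + (j+1).  Its left child is num s j + (s+1), its right child
   num s j + (s+2). *)
Definition num (s j : nat) : nat := (s * s.+1) %/ 2 + j + 1.

(* A directed path in G_k from node 1 to layer k visits exactly one node per
   layer; we encode it by p : layer (0-based) -> position in that layer
   (0-based).  It starts at node 1 (p 0 = 0) and each step goes to the left
   child (same position) or right child (position + 1). *)
Definition is_cpath (k : nat) (p : {ffun 'I_k -> 'I_k}) : bool :=
  [forall s : 'I_k, (val s == 0) ==> (val (p s) == 0)] &&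
  [forall s : 'I_k, forall t : 'I_k,
      (val t == (val s).+1) ==>
      ((val (p t) == val (p s)) || (val (p t) == (val (p s)).+1))].

(* Characteristic tuple of a path: delta_i = 1 iff the path passes node i
   (only indices 1..m(k) are meaningful). *)
Definition chi (k : nat) (p : {ffun 'I_k -> 'I_k}) : nat -> bool :=
  fun i => [exists s : 'I_k, num s (p s) == i].

Definition nu (k : nat) (d : nat -> bool) : {set 'I_(m k).+1} :=
  [set i : 'I_(m k).+1 |
     ((val i == 0) && ~~ d 1) ||
     [exists s : 'I_k, exists j : 'I_k,
        [&& val j <= val s, val i == num s j &
            (if (val s).+1 < k
             then [&& d (val i), ~~ d (val i + (val s).+1)
                                 & ~~ d (val i + (val s).+2)]
             else d (val i))]]].

(* Rows of T = T_k^* (f_{a_1},0)...(f_{a_n},0): characteristic tuples of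
   complete paths having value 0 at every attribute index in a. *)
Definition rowsT (k : nat) (a : seq nat) : {set {ffun 'I_k -> 'I_k}} :=
  [set p : {ffun 'I_k -> 'I_k} | is_cpath p && all (fun i => ~~ chi p i) a].

Definition r (k : nat) (a : seq nat) : nat :=
  #|[set nu k (chi p) | p in rowsT k a]|.

(* Main.v *)
Require Import Defs.
From mathcomp Require Import all_boot zify.
Set Implicit Arguments. Unset Strict Implicit.
Lemma tri s : (s.+1 * s.+2) %/ 2 = (s * s.+1) %/ 2 + s.+1.
Proof.
have -> : s.+1 * s.+2 = s.+1 * 2 + s * s.+1 by nia.
by rewrite divnMDl // addnC.
Qed.

Lemma Tmono s s' : s <= s' -> (s * s.+1) %/ 2 <= (s' * s'.+1) %/ 2.
Proof. move=> h; apply: leq_div2r; apply: leq_mul => //. Qed.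

Lemma numS s j : num s.+1 j = num s j + s.+1.
Proof. rewrite /num tri; lia. Qed.

Lemma num_lt s j s' j' : j <= s -> s < s' -> num s j < num s' j'.
Proof.
move=> hj hs; have := @Tmono s.+1 s' hs; rewrite /num tri; lia.
Qed.

Lemma num_inj s j s' j' : j <= s -> j' <= s' -> num s j = num s' j' -> s = s' /\ j = j'.
Proof.
move=> hj hj' e.
case: (ltngtP s s') => h.
- by have := @num_lt s j s' j' hj h; lia.
- by have := @num_lt s' j' s j hj' h; lia.
- subst; split => //; move: e; rewrite /num; lia.
Qed.

Lemma num_le_m k j : j <= k -> num k j <= m k.+1.
Proof. rewrite /m /num tri; lia. Qed.

Ltac slia := simpl in *; lia.
Section P.
Variable k : nat.
Implicit Type p : {ffun 'I_k -> 'I_k}.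

Lemma cp0 p : is_cpath p -> forall s : 'I_k, val s = 0 -> val (p s) = 0.
Proof. by move=> /andP[/forallP H _] s e; move/implyP: (H s); rewrite e eqxx => /(_ isT) /eqP. Qed.

Lemma cpS p : is_cpath p -> forall s t : 'I_k, val t = (val s).+1 ->
  val (p t) = val (p s) \/ val (p t) = (val (p s)).+1.
Proof.
move=> /andP[_ /forallP H] s t e; move: (H s) => /forallP /(_ t) /implyP.
by rewrite e eqxx => /(_ isT) /orP[] /eqP; auto.
Qed.

Lemma cple p : is_cpath p -> forall t : 'I_k, val (p t) <= val t.
Proof.
move=> cp t; move Hn: (val t) => n; elim: n t Hn => [|n IH] t Hn.
  by rewrite (cp0 cp Hn).
have nk : n < k by apply: (leq_trans _ (ltnW (ltn_ord t))); rewrite -Hn.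
have := cpS cp (s:=Ordinal nk) Hn; have := IH (Ordinal nk) erefl; rewrite /=.
move=> h1; case => ->; slia.
Qed.

Definition okp (a : seq nat) p (n : nat) :=
  [forall t : 'I_k, (val t <= n) ==> (num t (p t) \notin a)].
Definition RR (a : seq nat) (n : nat) : {set 'I_k} :=
  [set j | [exists p, [&& is_cpath p, okp a p n &
     [exists s : 'I_k, (val s == n) && (p s == j)]]]].
Definition GG (a : seq nat) l : {set 'I_k} := [set j : 'I_k | (val j <= l) && (num l j \in a)].
Definition FF (a : seq nat) n : {set 'I_k * 'I_k} :=
  [set x : 'I_k * 'I_k | [&& 0 < val x.1 <= n, val x.2 <= val x.1 & num x.1 x.2 \in a]].

Lemma RR_le a n j : j \in RR a n -> val j <= n.
Proof.
rewrite inE => /existsP [p /and3P [cp _ /existsP [s /andP [/eqP e /eqP <-]]]].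
by rewrite -e; apply: cple.
Qed.

Lemma RR_mono a n n' : n < k -> n <= n' -> RR a n' != set0 -> RR a n != set0.
Proof.
move=> nk le /set0Pn [j]; rewrite inE => /existsP [p /and3P [cp ok _]].
apply/set0Pn; exists (p (Ordinal nk)); rewrite inE; apply/existsP; exists p.
rewrite cp /=; apply/andP; split.
  apply/forallP => t; apply/implyP => h; move/forallP: ok => /(_ t) /implyP; apply.
  slia.
by apply/existsP; exists (Ordinal nk); rewrite /= !eqxx.
Qed.

Lemma RR_ext a n (i j : 'I_k) : n.+1 < k -> i \in RR a n ->
  (val j = val i \/ val j = (val i).+1) -> j \in RR a n.+1 :|: GG a n.+1.
Proof.
move=> nk iR hj; have ile := RR_le iR.
rewrite inE; case ja: (num n.+1 j \in a).
  by rewrite orbC inE ja andbT; case: hj => ->; move: ile; rewrite /=; slia.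
apply/orP; left.
move: iR; rewrite inE => /existsP [p /and3P [cp ok /existsP [s /andP [/eqP es /eqP ps]]]].
pose p' := [ffun t : 'I_k => if val t <= n then p t else j].
rewrite inE; apply/existsP; exists p'; apply/and3P; split.
- apply/andP; split; apply/forallP => t.
    apply/implyP => /eqP t0; rewrite ffunE t0 leq0n; apply/eqP; exact: cp0 cp t t0.
  apply/forallP => t'; apply/implyP => /eqP e; rewrite !ffunE.
  case: (leqP (val t') n) => h'.
    have -> : val t <= n by slia.
    by case: (cpS cp e) => ->; rewrite eqxx ?orbT.
  case: (leqP (val t) n) => h; last by rewrite eqxx.
  have tn : t = s by apply: val_inj; slia.
  by subst t; rewrite ps; case: hj => ->; rewrite eqxx ?orbT.
- apply/forallP => t; apply/implyP => h; rewrite ffunE.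
  case: (leqP (val t) n) => h'.
    by move/forallP: ok => /(_ t) /implyP; apply.
  have -> : val t = n.+1 by slia.
  by rewrite ja.
- apply/existsP; exists (Ordinal nk); rewrite /= eqxx /= ffunE /=.
  by rewrite ltnn.
Qed.
End P.
Section Q.
Variable k : nat.
Variable a : seq nat.

Lemma step n : n.+1 < k -> RR k a n != set0 ->
  #|RR k a n| < #|RR k a n.+1| + #|GG k a n.+1|.
Proof.
move=> nk /set0Pn [i0 i0S].
set S := RR k a n.
pose M := [arg max_(i > i0 in S) val i].
have [MS Mmax] : M \in S /\ forall i, i \in S -> val i <= val M.
  rewrite /M; case: arg_maxnP => // x xS h; split => // i iS; exact: h.
have Mle := RR_le MS.
have Mk : (val M).+1 < k by slia.
pose J := Ordinal Mk.
have JS : J \notin S by apply/negP => /Mmax /=; rewrite ltnn.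
have sub : J |: S \subset RR k a n.+1 :|: GG k a n.+1.
  apply/subsetP => j; rewrite in_setU1 => /orP [/eqP -> | jS].
    by apply: (RR_ext (i:=M)) => //; right.
  by apply: (RR_ext (i:=j)) => //; left.
have := subset_leq_card sub; rewrite cardsU1 JS /= cardsU; move=> h; apply: (leq_trans h); exact: leq_subr.
Qed.

Lemma FF_step n : n.+1 < k -> #|FF k a n| + #|GG k a n.+1| <= #|FF k a n.+1|.
Proof.
move=> nk; pose o := Ordinal nk.
pose B := [set (o, j) | j in GG k a n.+1].
have cB : #|B| = #|GG k a n.+1| by apply: card_imset => x y [].
have dis : FF k a n :&: B = set0.
  apply/setP => x; rewrite !inE; apply/negP => /andP [H /imsetP [j _ e]].
  by move: H; rewrite e /= ltnn.
have sub : FF k a n :|: B \subset FF k a n.+1.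
  apply/subsetP => x; rewrite !inE => /orP [/and3P [/andP [h1 h2] h3 h4] | /imsetP [j jG e]].
    by move=> /=; rewrite h1 h3 h4 (leq_trans h2 (leqnSn n)).
  by move: jG; rewrite e inE /= ltnSn.
have := subset_leq_card sub; have := cardsUI (FF k a n) B; rewrite dis cards0 cB; lia.
Qed.

Lemma FF_bound n : #|FF k a n| <= size a.
Proof.
pose f := fun x : 'I_k * 'I_k => num x.1 x.2.
have -> : #|FF k a n| = size (map f (enum (FF k a n))) by rewrite size_map cardE.
apply: uniq_leq_size.
  rewrite map_inj_in_uniq ?enum_uniq // => x y.
  rewrite !mem_enum !inE => /and3P [_ hx _] /and3P [_ hy _] e.
  have [e1 e2] := num_inj hx hy e.
  by case: x y e1 e2 {hx hy e} => [x1 x2] [y1 y2] /= /val_inj -> /val_inj ->.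
move=> z /mapP [x]; rewrite mem_enum inE => /and3P [_ _ h] ->; exact: h.
Qed.

Lemma inv_main n : n < k -> RR k a n != set0 -> n.+1 <= #|RR k a n| + #|FF k a n|.
Proof.
elim: n => [|n IH] nk ne.
  by move: ne; rewrite -card_gt0; lia.
have ne' := RR_mono (ltnW nk) (leqnSn n) ne.
have := IH (ltnW nk) ne'; have := step nk ne'; have := FF_step nk; lia.
Qed.
End Q.

Lemma chiP k (p : {ffun 'I_k -> 'I_k}) (t : 'I_k) : chi p (num t (p t)).
Proof. by apply/existsP; exists t. Qed.

Lemma nuE k (p : {ffun 'I_k.+1 -> 'I_k.+1}) : is_cpath p ->
  nu k.+1 (chi p) = [set inord (num k (p ord_max))].
Proof.
move=> cp.
have pm : num k (p ord_max) < (m k.+1).+1.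
  by rewrite ltnS num_le_m // -ltnS.
apply/setP => i; rewrite in_set1 inE; apply/idP/idP.
- case/orP.
    move=> /andP [_ /negP []]; have := chiP p ord0; rewrite (cp0 cp (s:=ord0)) //.
  case/existsP => s /existsP [j /and3P [js /eqP ei hh]].
  case: ifP hh => hs.
    case/and3P => /existsP [t /eqP et] n1 n2.
    rewrite ei in et.
    have [ets etj] := num_inj (cple cp t) js et.
    pose t' := Ordinal hs.
    have := cpS cp (s:=s) (t:=t') erefl.
    have ps : val (p s) = j by have -> : s = t by apply: val_inj.
    rewrite ps => -[] e.
      by case/negP: n1; rewrite ei (_ : _ + _ = num t' (p t')) ?chiP // e numS.
    by case/negP: n2; rewrite ei (_ : _ + _ = num t' (p t')) ?chiP // e /= numS /num; lia.
  move=> /existsP [t /eqP et].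
  have sk : val s = k by have := ltn_ord s; slia.
  rewrite ei in et.
  have [ets etj] := num_inj (cple cp t) js et.
  have tm : t = ord_max by apply: val_inj; slia.
  apply/eqP; apply: val_inj; rewrite /= inordK // ei -etj tm sk //.
- move=> /eqP ->; apply/orP; right; apply/existsP; exists ord_max; apply/existsP.
  exists (p ord_max); rewrite /= inordK // eqxx -ltnS ltn_ord /= ltnn.
  exact: chiP.
Qed.

Theorem lemma8 (k : nat) (a : seq nat) :
  0 < k ->
  all (fun i => 0 < i <= m k) a ->
  rowsT k a != set0 ->
  maxn 1 (k - size a) <= r k a.
Proof.
case: k => [//|k] _ _ /set0Pn [p0].
have rowsP : forall p, p \in rowsT k.+1 a -> is_cpath p /\ okp a p k.
  move=> p; rewrite inE => /andP [cp /allP al]; split => //.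
  apply/forallP => t; apply/implyP => _; apply/negP => ta.
  by have := al _ ta; rewrite chiP.
move=> /rowsP [cp0 ok0].
have ne : RR k.+1 a k != set0.
  apply/set0Pn; exists (p0 ord_max); rewrite inE; apply/existsP; exists p0.
  by rewrite cp0 ok0 /=; apply/existsP; exists ord_max; rewrite !eqxx.
have Hinv := @inv_main k.+1 a k (leqnn k.+1) ne.
have Hf := @FF_bound k.+1 a k.
pose Fm := fun j : 'I_k.+1 => [set (inord (num k j) : 'I_(m k.+1).+1)].
have Hr : #|RR k.+1 a k| <= r k.+1 a.
  rewrite -(card_in_imset (f:=Fm)).
    apply: subset_leq_card; apply/subsetP => X /imsetP [j jR ->].
    move: jR; rewrite inE => /existsP [p /and3P [cp ok /existsP [s /andP [/eqP es /eqP ps]]]].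
    have sm : s = ord_max by apply: val_inj; rewrite es.
    apply/imsetP; exists p.
      rewrite inE cp /=; apply/allP => i ia; apply/negP => /existsP [t /eqP e].
      move/forallP: ok => /(_ t) /implyP; rewrite -ltnS ltn_ord e ia => /(_ isT) //.
    by rewrite nuE // -sm ps.
  move=> x y _ _ /setP /(_ (inord (num k x))); rewrite !inE eqxx => /esym /eqP.
  move=> e; have := congr1 (@nat_of_ord _) e; rewrite !inordK; last 2 first.
  - by rewrite ltnS num_le_m // -ltnS ltn_ord.
  - by rewrite ltnS num_le_m // -ltnS ltn_ord.
  move=> e2; apply: val_inj => /=; move: e2; rewrite /num; lia.
have : 0 < #|RR k.+1 a k| by rewrite card_gt0.
move=> h; rewrite geq_max; apply/andP; split; lia.
Qed.
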